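(* Let $G$, $H$, $K$ be impartial games. Then $(G\circ H)\circ K = G\circ (H+K)$, where $=$ denotes equality of games (equivalently, $(G\circ H)\circ K + G\circ(H+K)$ is a $\mathcal{P}$-position).
   Context: All games are finite (short) impartial games under normal play. A game is identified with its set of options; $\mathbf{E}$ denotes the game with no options, and $\equiv$ denotes identity of games (same set of options, recursively). The disjunctive sum is the game $G+H \equiv \{g+H,\ G+h\}$ ($g$ ranging over options of $G$, $h$ over options of $H$), so $\mathbf{E}+\mathbf{E}\equiv\mathbf{E}$. A $\mathcal{P}$-position is a game all of whose options are $\mathcal{N}$-positions; an $\mathcal{N}$-position has some option that is a $\mathcal{P}$-position. Two games are equal, $G=H$, if $G+X$ and $H+X$ have the same outcome ($\mathcal{P}$ or $\mathcal{N}$) for every game $X$; for impartial games this holds iff $G+H$ is a $\mathcal{P}$-position. The split sum is defined recursively by: $G\circ H \equiv \mathbf{E}$ if $G\equiv \mathbf{E}$; $G\circ H\equiv G$ if $H\equiv\mathbf{E}$ (and $G\not\equiv\mathbf{E}$); otherwise $G\circ H \equiv \{G\circ h,\ g\circ H\}$. *)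

(* Defs.v *)
From Stdlib Require Import List Bool.
Import ListNotations.

(* A game is given by its (finite) list of options.  Identity of games
   (same set of options, recursively) is not needed for the statement:
   all notions below (outcome, sums, equality) respect it. *)
Inductive game : Type := Game : list game -> game.

Definition E : game := Game [].

Definition options (G : game) : list game := match G with Game gs => gs end.

Fixpoint add (G : game) : game -> game :=
  match G with
  | Game gs =>
      fix addG (H : game) : game :=
        match H with
        | Game hs => Game (map (fun g => add g H) gs ++ map addG hs)
        end
  end.

Fixpoint isP (G : game) : bool :=
  match G with
  | Game gs => forallb (fun g => negb (isP g)) gs
  end.

Definition isN (G : game) : bool := negb (isP G).

Fixpoint ssplit (G : game) : game -> game :=
  match G with
  | Game [] => fun _ => Game []
  | Game gs =>
      fix ssplitG (H : game) : game :=
        match H with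
        | Game [] => G
        | Game hs => Game (map ssplitG hs ++ map (fun g => ssplit g H) gs)
        end
  end.

Definition game_eq (G H : game) : Prop :=
  forall X : game, isP (add G X) = isP (add H X).

(* Main.v *)
Require Import Defs.
From Stdlib Require Import List Bool Lia Arith.
Import ListNotations.

Fixpoint gsize (G : game) : nat :=
  match G with Game gs => S (list_sum (map gsize gs)) end.

Lemma gsize_in : forall x l, In x l -> gsize x < gsize (Game l).
Proof.
  intros x l; induction l as [|a l IH]; simpl; [tauto|].
  intros [->|H]; [lia|]. specialize (IH H). simpl in IH. lia.
Qed.

Inductive sim : game -> game -> Prop :=
| sim_intro : forall gs hs,
    (forall g, In g gs -> exists h, In h hs /\ sim g h) ->
    (forall h, In h hs -> exists g, In g gs /\ sim g h) ->
    sim (Game gs) (Game hs).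

Lemma sim_sym_n : forall n A B, gsize A + gsize B <= n -> sim A B -> sim B A.
Proof.
  induction n; intros A B Hs Hab; [destruct A; destruct B; simpl in Hs; lia|].
  inversion Hab as [gs hs H1 H2]; subst.
  constructor.
  - intros h Hh. destruct (H2 h Hh) as [g [Hg Hgh]]. exists g; split; auto.
    apply IHn; auto. pose proof (gsize_in _ _ Hh); pose proof (gsize_in _ _ Hg); lia.
  - intros g Hg. destruct (H1 g Hg) as [h [Hh Hgh]]. exists h; split; auto.
    apply IHn; auto. pose proof (gsize_in _ _ Hh); pose proof (gsize_in _ _ Hg); lia.
Qed.

Lemma sim_sym : forall A B, sim A B -> sim B A.
Proof. intros; eapply sim_sym_n; eauto. Qed.

Lemma sim_refl_n : forall n A, gsize A <= n -> sim A A.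
Proof.
  induction n; intros [gs] Hs; [simpl in Hs; lia|].
  constructor; intros g Hg; exists g; split; auto; apply IHn;
    pose proof (gsize_in _ _ Hg); lia.
Qed.

Lemma sim_refl : forall A, sim A A.
Proof. intros; eapply sim_refl_n; eauto. Qed.

Lemma add_eq : forall gs hs,
  add (Game gs) (Game hs) =
  Game (map (fun g => add g (Game hs)) gs ++ map (add (Game gs)) hs).
Proof. reflexivity. Qed.

Lemma ssplit_eq : forall gs hs, gs <> [] -> hs <> [] ->
  ssplit (Game gs) (Game hs) =
  Game (map (ssplit (Game gs)) hs ++ map (fun g => ssplit g (Game hs)) gs).
Proof. intros [|g gs] [|h hs] H1 H2; try congruence; reflexivity. Qed.

Lemma ssplit_E_r : forall X, ssplit X E = X.
Proof. intros [[|g gs]]; reflexivity. Qed.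

Lemma ssplit_E_l : forall X, ssplit E X = E.
Proof. intros [[|g gs]]; reflexivity. Qed.

Lemma add_E_l_n : forall n K, gsize K <= n -> add E K = K.
Proof.
  induction n; intros [ks] Hs; [simpl in Hs; lia|].
  change (add E (Game ks)) with (Game (map (add E) ks)). f_equal.
  rewrite <- (map_id ks) at 2. apply map_ext_in. intros k Hk.
  apply IHn. pose proof (gsize_in _ _ Hk); lia.
Qed.

Lemma add_E_r_n : forall n K, gsize K <= n -> add K E = K.
Proof.
  induction n; intros [ks] Hs; [simpl in Hs; lia|].
  unfold E. rewrite add_eq. simpl. rewrite app_nil_r. f_equal.
  rewrite <- (map_id ks) at 2. apply map_ext_in. intros k Hk.
  apply IHn. pose proof (gsize_in _ _ Hk); lia.
Qed.

Lemma isP_eq : forall l, isP (Game l) = forallb (fun g => negb (isP g)) l.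
Proof. reflexivity. Qed.

Lemma sim_isP_n : forall n A B X, gsize A + gsize B + gsize X <= n -> sim A B ->
  isP (add A X) = isP (add B X).
Proof.
  induction n; intros A B X Hs Hab; [destruct A, B, X; simpl in Hs; lia|].
  destruct X as [xs].
  inversion Hab as [gs hs H1 H2]; subst.
  rewrite !add_eq, !isP_eq.
  apply eq_true_iff_eq. rewrite !forallb_forall. split; intros Hall y Hy;
    apply in_app_iff in Hy; destruct Hy as [Hy|Hy]; apply in_map_iff in Hy;
    destruct Hy as [z [<- Hz]].
  - destruct (H2 z Hz) as [g [Hg Hgz]].
    rewrite <- (IHn g z (Game xs)); [|pose proof (gsize_in _ _ Hz); pose proof (gsize_in _ _ Hg); lia|auto].
    apply Hall. apply in_app_iff; left; apply (in_map (fun g => add g (Game xs))); auto.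
  - rewrite <- (IHn (Game gs) (Game hs) z); [|pose proof (gsize_in _ _ Hz); lia|auto].
    apply Hall. apply in_app_iff; right; apply in_map; auto.
  - destruct (H1 z Hz) as [h [Hh Hzh]].
    rewrite (IHn z h (Game xs)); [|pose proof (gsize_in _ _ Hz); pose proof (gsize_in _ _ Hh); lia|auto].
    apply Hall. apply in_app_iff; left; apply (in_map (fun g => add g (Game xs))); auto.
  - rewrite (IHn (Game gs) (Game hs) z); [|pose proof (gsize_in _ _ Hz); lia|auto].
    apply Hall. apply in_app_iff; right; apply in_map; auto.
Qed.

Lemma main_n : forall n G H K, gsize G + gsize H + gsize K <= n ->
  sim (ssplit (ssplit G H) K) (ssplit G (add H K)).
Proof.
  induction n; intros G H K Hs; [destruct G, H, K; simpl in Hs; lia|].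
  destruct G as [[|g0 gs']]; [apply sim_refl|].
  destruct H as [[|h0 hs']].
  { change (Game []) with E. rewrite ssplit_E_r, (add_E_l_n _ K (le_n _)). apply sim_refl. }
  destruct K as [[|k0 ks']].
  { change (Game []) with E. rewrite ssplit_E_r, (add_E_r_n _ _ (le_n _)). apply sim_refl. }
  set (gs := g0 :: gs') in *. set (hs := h0 :: hs') in *. set (ks := k0 :: ks') in *.
  assert (Ng : gs <> []) by discriminate.
  assert (Nh : hs <> []) by discriminate.
  assert (Nk : ks <> []) by discriminate.
  assert (EL := ssplit_eq gs hs Ng Nh).
  remember (map (ssplit (Game gs)) hs ++ map (fun g => ssplit g (Game hs)) gs) as L eqn:HL.
  assert (NL : L <> []) by (subst L; unfold hs; simpl; discriminate).
  rewrite EL, (ssplit_eq L ks NL Nk), add_eq.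
  rewrite ssplit_eq by (unfold hs; simpl; discriminate).
  rewrite <- EL.
  assert (IH : forall G' H' K', gsize G' + gsize H' + gsize K' < S n ->
     sim (ssplit (ssplit G' H') K') (ssplit G' (add H' K'))) by (intros; apply IHn; lia).
  constructor.
  - intros x Hx. apply in_app_iff in Hx. destruct Hx as [Hx|Hx]; apply in_map_iff in Hx;
      destruct Hx as [z [<- Hz]].
    + exists (ssplit (Game gs) (add (Game hs) z)). split.
      * apply in_app_iff; left. apply in_map. apply in_app_iff; right. apply in_map; auto.
      * apply IH. pose proof (gsize_in _ _ Hz); lia.
    + subst L. apply in_app_iff in Hz. destruct Hz as [Hz|Hz]; apply in_map_iff in Hz;
        destruct Hz as [w [<- Hw]].
      * exists (ssplit (Game gs) (add w (Game ks))). split.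
        -- apply in_app_iff; left. apply in_map. apply in_app_iff; left.
           apply (in_map (fun h => add h (Game ks))); auto.
        -- apply IH. pose proof (gsize_in _ _ Hw); lia.
      * exists (ssplit w (add (Game hs) (Game ks))). split.
        -- apply in_app_iff; right. apply (in_map (fun g => ssplit g (add (Game hs) (Game ks)))); auto.
        -- apply IH. pose proof (gsize_in _ _ Hw); lia.
  - intros x Hx. apply in_app_iff in Hx. destruct Hx as [Hx|Hx]; apply in_map_iff in Hx;
      destruct Hx as [z [<- Hz]].
    + apply in_app_iff in Hz. destruct Hz as [Hz|Hz]; apply in_map_iff in Hz;
        destruct Hz as [w [<- Hw]].
      * exists (ssplit (ssplit (Game gs) w) (Game ks)). split.
        -- apply in_app_iff; right. subst L. rewrite map_app. apply in_app_iff; left.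
           apply (in_map (fun g => ssplit g (Game ks))). apply in_map; auto.
        -- apply IH. pose proof (gsize_in _ _ Hw); lia.
      * exists (ssplit (ssplit (Game gs) (Game hs)) w). split.
        -- rewrite EL. apply in_app_iff; left. apply in_map; auto.
        -- apply IH. pose proof (gsize_in _ _ Hw); lia.
    + exists (ssplit (ssplit z (Game hs)) (Game ks)). split.
      * apply in_app_iff; right. subst L. rewrite map_app. apply in_app_iff; right.
        apply (in_map (fun g => ssplit g (Game ks))).
        apply (in_map (fun g => ssplit g (Game hs))); auto.
      * apply IH. pose proof (gsize_in _ _ Hz); lia.
Qed.

Theorem theorem2p4 (G H K : game) :
  game_eq (ssplit (ssplit G H) K) (ssplit G (add H K)).
Proof.
  intros X. apply (sim_isP_n _ _ _ X (le_n _)). apply (main_n _ _ _ _ (le_n _)).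
Qed.
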